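(* Let $p,d\in\mathbb{N}$ and let $G$ be a finite graph such that $\mathrm{Sep}(G,p)\le d$ and $K_{p,p}$ is not a minor of $G$. Then for every $k\ge p$, $$\mathrm{Sep}(G,k)\le d+k^2+k\,2^k\max\{p,d\}.$$
   Context: Graphs are finite, simple, undirected. $\mathrm{Sep}(G,k)$ is the maximum, over all vertex sets $S$ with $|S|\le k$, of the number of connected components of $G-S$. *)

(* Defs.v *)
(* A finite simple graph is a symmetric irreflexive
   relation e : rel T on a finType T. *)
From mathcomp Require Import all_boot.
Set Implicit Arguments. Unset Strict Implicit. Unset Printing Implicit Defensive.

Section Graphs.
Variable T : finType.
Variable e : rel T.

Definition induced_rel (A : {set T}) : rel T :=
  fun x y => [&& x \in A, y \in A & e x y].

Definition comp_in (A : {set T}) (x : T) : {set T} :=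
  [set y in A | connect (induced_rel A) x y].

Definition ncomp_del (S : {set T}) : nat :=
  #|[set comp_in (~: S) x | x in ~: S]|.

Definition Sep (k : nat) : nat :=
  \max_(S : {set T} | #|S| <= k) ncomp_del S.

Definition connected_set (A : {set T}) : Prop :=
  A != set0 /\ forall x y, x \in A -> y \in A -> connect (induced_rel A) x y.

Definition Kpq_minor (p q : nat) : Prop :=
  exists (X : 'I_p -> {set T}) (Y : 'I_q -> {set T}),
    (forall i, connected_set (X i)) /\
    (forall j, connected_set (Y j)) /\
    (forall i i', i != i' -> [disjoint X i & X i']) /\
    (forall j j', j != j' -> [disjoint Y j & Y j']) /\
    (forall i j, [disjoint X i & Y j]) /\
    (forall i j, exists x y, [&& x \in X i, y \in Y j & e x y]).
End Graphs.

(* Main.v *)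
Require Import Defs.
From mathcomp Require Import all_boot.
Set Implicit Arguments. Unset Strict Implicit. Unset Printing Implicit Defensive.

Section Aux.
Variable T : finType.
Variable e : rel T.
Hypothesis e_sym : symmetric e.

Lemma induced_sym (A : {set T}) : symmetric (induced_rel e A).
Proof. move=> x y; rewrite /induced_rel e_sym; by case: (x \in A); case: (y \in A). Qed.

Lemma path_closed (r : rel T) (Y : {set T}) :
  (forall a b, r a b -> e a b) ->
  (forall z w, z \in Y -> r z w -> w \in Y) ->
  forall q x, x \in Y -> path r x q ->
    last x q \in Y /\ connect (induced_rel e Y) x (last x q).
Proof.
move=> re cl; elim=> [|y q IH] x xY /=.
  by move=> _; split.
case/andP=> rxy pq.
have yY := cl _ _ xY rxy.
have [H1 H2] := IH y yY pq.
split=> //.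
have c1 : connect (induced_rel e Y) x y.
  by apply: connect1; rewrite /induced_rel xY yY /=; exact: re.
exact: connect_trans c1 H2.
Qed.

Lemma comp_closed (B : {set T}) (x0 z w : T) : z \in comp_in e B x0 -> induced_rel e B z w ->
  w \in comp_in e B x0.
Proof.
rewrite !inE => /andP[_ cz] r; have := r; rewrite /induced_rel => /and3P[_ wB _].
by rewrite wB (connect_trans cz (connect1 r)).
Qed.

Lemma comp_self (B : {set T}) (x : T) : x \in B -> x \in comp_in e B x.
Proof. by move=> xB; rewrite inE xB connect0. Qed.

Lemma comp_eq (B : {set T}) (x y : T) : y \in comp_in e B x -> comp_in e B y = comp_in e B x.
Proof.
rewrite inE => /andP[yB cxy]; apply/setP=> z; rewrite !inE.
have cyx : connect (induced_rel e B) y x by rewrite (sym_connect_sym (induced_sym B)).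
case zB: (z \in B) => //=; apply/idP/idP => c.
- exact: connect_trans cxy c.
- exact: connect_trans cyx c.
Qed.

Lemma comp_connected (B : {set T}) (x : T) : x \in B -> connected_set e (comp_in e B x).
Proof.
move=> xB; split.
  by apply/set0Pn; exists x; exact: comp_self.
have H : forall y, y \in comp_in e B x ->
    connect (induced_rel e (comp_in e B x)) x y.
  move=> y; rewrite inE => /andP[_ /connectP [q pq ->]].
  have re : forall a b, induced_rel e B a b -> e a b by move=> a b /and3P[].
  have [_ ] := @path_closed (induced_rel e B) (comp_in e B x) re
     (@comp_closed B x) q x (comp_self xB) pq.
  done.
move=> y z yC zC.
have c1 : connect (induced_rel e (comp_in e B x)) y x.
  by rewrite (sym_connect_sym (induced_sym _)); exact: H.
exact: connect_trans c1 (H z zC).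
Qed.

Lemma comp_disj (B : {set T}) (x y : T) : comp_in e B x != comp_in e B y ->
  [disjoint comp_in e B x & comp_in e B y].
Proof.
move=> neq; rewrite -setI_eq0; apply/eqP/setP => z; rewrite [in RHS]inE [in LHS]in_setI.
apply/negbTE/negP => /andP[zx zy].
by move/eqP: neq; apply; rewrite -(comp_eq zx) -(comp_eq zy).
Qed.

End Aux.

Theorem proposition4p17 (T : finType) (e : rel T)
  (e_sym : symmetric e) (e_irr : irreflexive e) (p d : nat) :
  Sep e p <= d ->
  ~ Kpq_minor e p p ->
  forall k : nat, p <= k ->
    Sep e k <= d + k ^ 2 + k * 2 ^ k * maxn p d.
Proof.
move=> Hsep Hmin k pk.
have p0 : 0 < p.
  case: p Hmin {Hsep pk} => // Hmin; exfalso; apply: Hmin.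
  exists (fun _ => set0), (fun _ => set0).
  do 5 (split; first by move=> i; exfalso; case: i).
  by move=> i; exfalso; case: i.
apply/bigmax_leqP => S HS.
set m := maxn p d.
set Comps := [set comp_in e (~: S) x | x in ~: S].
pose nb (C : {set T}) := [set s in S | [exists y in C, e y s]].
have bound : forall A, A \in powerset S ->
    #|[set C | (C \in Comps) && (nb C == A)]| <= m.
  move=> A; rewrite powersetE => AS.
  set FA := [set C | (C \in Comps) && (nb C == A)].
  have FAc : forall C, C \in FA -> exists2 x, x \in ~: S & C = comp_in e (~: S) x.
    by move=> C; rewrite inE => /andP[/imsetP[x xS ->] _]; exists x.
  have FAnb : forall C, C \in FA -> nb C = A.
    by move=> C; rewrite inE => /andP[_ /eqP].
  case: (leqP #|A| p) => hA.
    apply: (@leq_trans d); last exact: leq_maxr.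
    apply: leq_trans Hsep.
    apply: (@leq_trans (ncomp_del e A)); last by apply: leq_bigmax_cond.
    apply: subset_leq_card; apply/subsetP => C CF.
    have nbC := FAnb C CF.
    have [x xS Ex] := FAc C CF.
    rewrite Ex in nbC *.
    have xA : x \in ~: A.
      rewrite !inE in xS *; apply: contra xS; exact: (subsetP AS).
    apply/imsetP; exists x => //.
    apply/setP => y; apply/idP/idP.
    - rewrite !inE => /andP[yS c].
      rewrite (contra (subsetP AS y) yS) /=.
      apply: (connect_sub _ c) => a b /and3P[aS bS eab].
      apply: connect1; rewrite /induced_rel eab andbT.
      rewrite !inE in aS bS *.
      by rewrite (contra (subsetP AS a) aS) (contra (subsetP AS b) bS).
    - rewrite inE => /andP[_ /connectP [q pq ->]].
      have re : forall a b, induced_rel e (~: A) a b -> e a b by move=> a b /and3P[].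
      have cl : forall z w, z \in comp_in e (~: S) x -> induced_rel e (~: A) z w ->
          w \in comp_in e (~: S) x.
        move=> z w zC r; have := r; move=> /and3P[_ wA ezw].
        case wS: (w \in S).
          have : w \in nb (comp_in e (~: S) x).
            by rewrite inE wS /=; apply/existsP; exists z; rewrite zC.
          by rewrite nbC => wA'; rewrite inE wA' in wA.
        apply: (comp_closed zC); rewrite /induced_rel ezw !inE wS andbT /=.
        by move: zC; rewrite !inE andbT => /andP[].
      by have [] := @path_closed T e (induced_rel e (~: A)) (comp_in e (~: S) x) re
        cl q x (comp_self e xS) pq.
  apply: (@leq_trans p); last exact: leq_maxl.
  apply: ltnW; rewrite ltnNge; apply/negP => HF.
  have HA : p <= #|A| by exact: ltnW.
  apply: Hmin.
  pose a (i : 'I_p) : T := enum_val (widen_ord HA i).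
  pose Y (j : 'I_p) : {set T} := enum_val (widen_ord HF j).
  have aA : forall i, a i \in A by move=> i; exact: enum_valP.
  have YF : forall j, Y j \in FA by move=> j; exact: enum_valP.
  exists (fun i => [set a i]), Y.
  split.
    move=> i; split; first by apply/set0Pn; exists (a i); rewrite inE.
    by move=> x y; rewrite !inE => /eqP-> /eqP->; exact: connect0.
  split.
    move=> j; have [x xS ->] := FAc _ (YF j); exact: comp_connected.
  split.
    move=> i i' ne; rewrite disjoints1 inE; apply: contra ne => /eqP h.
    have := enum_val_inj h => /(congr1 val) /= h'.
    by apply/eqP/val_inj.
  split.
    move=> j j' ne.
    have [x xS Ex] := FAc _ (YF j); have [x' xS' Ex'] := FAc _ (YF j').
    rewrite Ex Ex'; apply: comp_disj => //; rewrite -Ex -Ex'.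
    apply: contra ne => /eqP h.
    have := enum_val_inj h => /(congr1 val) /= h'.
    by apply/eqP/val_inj.
  split.
    move=> i j; rewrite disjoints1.
    have [x xS ->] := FAc _ (YF j).
    rewrite !inE negb_and; apply/orP; left.
    by rewrite negbK; exact: (subsetP AS).
  move=> i j.
  have := aA i; rewrite -(FAnb _ (YF j)) inE => /andP[_ /existsP [y /andP[yY eya]]].
  by exists (a i), y; rewrite inE eqxx yY e_sym.
have H1 : ncomp_del e S <= 2 ^ #|S| * m.
  rewrite /ncomp_del -/Comps -sum1_card.
  rewrite (partition_big nb (fun A => A \in powerset S)); last first.
    move=> C _; rewrite powersetE; apply/subsetP => s; rewrite inE.
    by case/andP.
  rewrite -card_powerset -sum_nat_const; apply: leq_sum => A HA.
  by rewrite sum1dep_card; exact: bound.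
apply: leq_trans H1 _.
have k0 : 0 < k by exact: leq_trans pk.
apply: leq_trans (leq_addl _ _).
apply: (@leq_trans (2 ^ k * m)).
  by rewrite leq_mul2r leq_pexp2l // orbT.
by rewrite -mulnA leq_pmull.
Qed.
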